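(* Let $n\ge 1$, $s\in\{1,\dots,n\}$, let $C\in\mathbb{R}^{n\times n}$ be symmetric positive definite, and let $z^*=\max\{\log\det(C_{S,S}) : S\subseteq\{1,\dots,n\},\ |S|=s\}$. Then for every $t$ with $0\le t\le\lambda_{\min}(C)$, $$z^*=\max\Big\{\widehat{\Phi}_s\big(M_t(x);t\big) : x\in\{0,1\}^n,\ \textstyle\sum_{i=1}^n x_i=s\Big\}.$$
   Context: $\log$ is natural, $C_{S,S}$ is the principal submatrix of $C$ indexed by $S$, and $\lambda_{\min}(C)$ is the smallest eigenvalue of $C$. For $0\le t\le\lambda_{\min}(C)$ let $A(t)\in\mathbb{R}^{n\times n}$ be a Cholesky factor of $C-tI$ (so $C-tI=A(t)^\top A(t)$), with $i$-th column $a_i(t)$, and for $x\in[0,1]^n$ put $M_t(x)=\sum_i x_i a_i(t)a_i(t)^\top$. For a positive semidefinite $X$ with eigenvalues $\lambda_1(X)\ge\dots\ge\lambda_n(X)$, let $\Phi_s(X;t)=\sum_{i=1}^s\log(\lambda_i(X)+t)$. $\widehat{\Phi}_s(\cdot\,;t)$ is the concave envelope of $\Phi_s(\cdot\,;t)$ on the cone of $n\times n$ positive semidefinite matrices, i.e. the pointwise infimum of all concave functions there that are $\ge\Phi_s(\cdot\,;t)$. *)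

(* Defs.v *)
From HB Require Import structures.
From mathcomp Require Import all_boot all_order all_algebra.
From mathcomp Require Import boolp classical_sets reals constructive_ereal ereal.
From mathcomp Require Import exp.

Set Implicit Arguments.
Unset Strict Implicit.
Unset Printing Implicit Defensive.

Import Order.TTheory GRing.Theory Num.Theory.
Local Open Scope ring_scope.

Section Defs.
Variable R : realType.

Definition symmetric_mx n (X : 'M[R]_n) : Prop := X^T = X.

Definition psd n (X : 'M[R]_n) : Prop :=
  symmetric_mx X /\ forall v : 'cV[R]_n, 0 <= (v^T *m X *m v) 0 0.

Definition pd n (X : 'M[R]_n) : Prop :=
  symmetric_mx X /\ forall v : 'cV[R]_n, v != 0 -> 0 < (v^T *m X *m v) 0 0.

Definition spectrum n (X : 'M[R]_n) (l : seq R) : Prop :=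
  [/\ size l = n, sorted (fun a b => b <= a) l &
      char_poly X = \prod_(a <- l) ('X - a%:P)].

(* the sorted eigenvalue list (meaningful for symmetric real X) *)
Definition eigs n (X : 'M[R]_n) : seq R := xget [::] (spectrum X).

(* lambda_i(X), 1-based index i *)
Definition eigval n (X : 'M[R]_n) (i : nat) : R := nth 0 (eigs X) i.-1.

Definition lambda_min n (X : 'M[R]_n) : R := eigval X n.

Definition elog (x : R) : \bar R := if 0 < x then (ln x)%:E else -oo%E.

Definition Phi n (s : nat) (X : 'M[R]_n) (t : R) : \bar R :=
  (\sum_(1 <= i < s.+1) elog (eigval X i + t))%E.

Definition concave_on_psd n (f : 'M[R]_n -> \bar R) : Prop :=
  forall X Y : 'M[R]_n, psd X -> psd Y -> forall l : R, 0 < l < 1 ->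
    (l%:E * f X + (1 - l)%:E * f Y <= f (l *: X + (1 - l) *: Y)%R)%E.

(* concave envelope of Phi_s(.; t) on the PSD cone: pointwise infimum of all
   concave functions on the PSD cone that majorize Phi_s(.; t) there *)
Definition Phi_hat n (s : nat) (X : 'M[R]_n) (t : R) : \bar R :=
  ereal_inf [set f X | f in [set f : 'M[R]_n -> \bar R |
     concave_on_psd f /\ forall Y : 'M[R]_n, psd Y -> (Phi s Y t <= f Y)%E]].

Definition cholesky_factor n (B A : 'M[R]_n) : Prop :=
  [/\ forall i j : 'I_n, (j < i)%N -> A i j = 0,
      forall i : 'I_n, 0 <= A i i &
      B = A^T *m A].

Definition Mx n (A : 'M[R]_n) (x : 'I_n -> R) : 'M[R]_n :=
  \sum_(i < n) x i *: (col i A *m (col i A)^T).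

Definition principal_submx n (C : 'M[R]_n) (S : {set 'I_n}) : 'M[R]_#|S| :=
  \matrix_(i < #|S|, j < #|S|) C (enum_val i) (enum_val j).

Definition zstar n (C : 'M[R]_n) (s : nat) : \bar R :=
  (\big[maxe/-oo]_(S : {set 'I_n} | #|S| == s)
      elog (\det (principal_submx C S)))%E.

Definition rhs_max n (A : 'M[R]_n) (s : nat) (t : R) : \bar R :=
  (\big[maxe/-oo]_(b : {ffun 'I_n -> bool} | (\sum_(i < n) b i == s)%N)
      Phi_hat s (Mx A (fun i => (b i)%:R)) t)%E.

End Defs.

(* Main.v *)
Require Import Defs.
From HB Require Import structures.
From mathcomp Require Import all_boot all_order all_algebra.
From mathcomp Require Import boolp classical_sets reals constructive_ereal ereal.
From mathcomp Require Import exp.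
From mathcomp Require Import perm complex spectral sesquilinear lra ring.
Import Order.TTheory GRing.Theory Num.Theory.
Local Open Scope ring_scope.
Set Implicit Arguments. Unset Strict Implicit. Unset Printing Implicit Defensive.

Lemma char_poly_conj1 (F : comNzRingType) n (Q D P : 'M[F]_n) :
  Q *m P = 1%:M -> char_poly (Q *m D *m P) = char_poly D.
Proof.
move=> QP; rewrite /char_poly.
have E : char_poly_mx (Q *m D *m P) =
   map_mx polyC Q *m char_poly_mx D *m map_mx polyC P.
  rewrite /char_poly_mx mulmxBr mulmxBl -!map_mxM; congr (_ - _).
  by rewrite -mulmxA -scalar_mxC mulmxA -map_mxM QP map_mx1 mul1mx.
rewrite E !det_mulmx mulrC mulrA -det_mulmx -map_mxM.
by rewrite (mulmx1C QP) map_mx1 det1 mul1r.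
Qed.

Lemma char_poly_diag (F : comNzRingType) n (d : 'rV[F]_n) :
  char_poly (diag_mx d) = \prod_(i < n) ('X - (d 0 i)%:P).
Proof.
rewrite char_poly_trig ?diag_mx_is_trig //; apply: eq_bigr => i _.
by rewrite mxE eqxx mulr1n.
Qed.

Section K.
Variable R : realType.

Lemma ln_le_sub1 (x : R) : 0 < x -> ln x <= x - 1.
Proof.
move=> x0; have := @le_ln1Dx R (x - 1); rewrite addrCA subrr addr0; apply; lra.
Qed.

Lemma lnM' (x y : R) : 0 < x -> 0 < y -> ln (x * y) = ln x + ln y.
Proof. by move=> x0 y0; rewrite lnM ?posrE. Qed.

Lemma ln_tangent (g h : R) : 0 < g -> 0 < h -> ln g <= ln h + g / h - 1.
Proof.
move=> g0 h0.
have E : ln g = ln h + ln (g / h).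
  by rewrite -lnM' ?divr_gt0 // mulrC divfK // gt_eqF.
by rewrite E -addrA lerD2l; apply: ln_le_sub1; rewrite divr_gt0.
Qed.

Lemma sum_sub_le n (J : {set 'I_n}) (F : 'I_n -> R) :
  (forall j, 0 <= F j) -> \sum_(j in J) F j <= \sum_j F j.
Proof.
move=> F0; rewrite [X in _ <= X](bigID (mem J)) /= lerDl.
by apply: sumr_ge0.
Qed.

Lemma core n (J : {set 'I_n}) (d g : 'I_n -> R) (P : 'I_n -> 'I_n -> R) (t tau : R) :
  (forall j, 0 <= d j) -> (forall j, j \in J -> 0 < d j + t) ->
  (forall k, 0 < g k) -> (forall k, g k <= tau^-1) ->
  (forall k j, 0 <= P k j) -> (forall j, \sum_k P k j = 1) ->
  (forall k, \sum_j P k j = 1) ->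
  0 <= t -> t <= tau -> 0 < tau ->
  \sum_(j in J) ln (d j + t) <=
  \sum_k \sum_j g k * P k j * d j + \sum_k (t * g k - ln (g k))
  - #|J|%:R - (n%:R - #|J|%:R) * (t / tau + ln tau).
Proof.
move=> d0 dJ g0 gtau P0 Pc Pr t0 ttau tau0.
pose h j := \sum_k P k j * g k.
have hpos j : 0 < h j.
  rewrite lt_def; apply/andP; split; last first.
    by apply: sumr_ge0 => k _; rewrite mulr_ge0 // ltW.
  apply/eqP => /psumr_eq0P H.
  have : \sum_k P k j = 0.
    apply: big1 => k _; have /eqP := H (fun k _ => mulr_ge0 (P0 k j) (ltW (g0 k))) k isT.
    by rewrite mulf_eq0 (gt_eqF (g0 k)) orbF => /eqP.
  by rewrite Pc => /eqP; rewrite oner_eq0.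
pose a k := t * g k - ln (g k).
pose th := t / tau + ln tau.
have step1 j : j \in J -> ln (d j + t) <= d j * h j + \sum_k P k j * a k - 1.
  move=> jJ.
  have L1 := ln_le_sub1 (mulr_gt0 (dJ j jJ) (hpos j)).
  rewrite lnM' ?hpos ?dJ // in L1.
  have L2 : \sum_k P k j * ln (g k) <= ln (h j).
    have : \sum_k P k j * ln (g k) <= \sum_k P k j * (ln (h j) + g k / h j - 1).
      by apply: ler_sum => k _; apply: ler_wpM2l => //; exact: ln_tangent.
    suff -> : \sum_k P k j * (ln (h j) + g k / h j - 1) = ln (h j) by [].
    rewrite (eq_bigr (fun k => P k j * ln (h j) + (P k j * g k) / h j - P k j));
      last by move=> k _; rewrite mulrBr mulr1 mulrDr mulrA.
    rewrite sumrB big_split /= -!mulr_suml Pc mul1r divff ?gt_eqF ?hpos //.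
    by rewrite addrK.
  have L3 : \sum_k P k j * a k = t * h j - \sum_k P k j * ln (g k).
    rewrite /a (eq_bigr (fun k => t * (P k j * g k) - P k j * ln (g k))).
      by rewrite sumrB -mulr_sumr.
    by move=> k _; rewrite mulrBr mulrCA.
  rewrite L3; move: L1 L2; rewrite mulrDl; lra.
have step2 : \sum_(j in J) ln (d j + t) <=
    \sum_(j in J) (d j * h j) + \sum_(j in J) \sum_k P k j * a k - #|J|%:R.
  apply: le_trans (ler_sum _ step1) _.
  by rewrite sumrB big_split /= sumr_const.
have step3 : \sum_(j in J) (d j * h j) <= \sum_k \sum_j g k * P k j * d j.
  apply: le_trans (sum_sub_le _ _) _.
    by move=> j; rewrite mulr_ge0 // ltW.
  rewrite [X in _ <= X]exchange_big /=; apply: ler_sum => j _.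
  rewrite /h mulr_sumr; apply: ler_sum => k _; lra.
have ath k : th <= a k.
  have u1 := ln_le_sub1 (mulr_gt0 (g0 k) tau0).
  rewrite lnM' // in u1.
  have e1 : 0 <= (tau^-1 - g k) * (tau - t).
    by rewrite mulr_ge0 // subr_ge0.
  move: e1; rewrite /th /a mulrBl mulrBr mulrBr mulVf ?gt_eqF //.
  move: u1 (gtau k); rewrite mulrC [t / tau]mulrC.
  lra.
pose w k := \sum_(j in J) P k j.
have w1 k : w k <= 1 by rewrite -(Pr k); apply: sum_sub_le.
have w0 k : 0 <= w k by apply: sumr_ge0.
have step4 : \sum_(j in J) \sum_k P k j * a k = \sum_k w k * a k.
  by rewrite exchange_big /=; apply: eq_bigr => k _; rewrite /w mulr_suml.
have sw : \sum_k w k = #|J|%:R.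
  rewrite /w exchange_big /= (eq_bigr (fun _ => 1)) ?sumr_const //.
have step5 : \sum_k w k * a k <= \sum_k a k - n%:R * th + #|J|%:R * th.
  have -> : \sum_k w k * a k = \sum_k w k * (a k - th) + #|J|%:R * th.
    rewrite -sw mulr_suml -big_split /=; apply: eq_bigr => k _.
    by rewrite -mulrDr subrK.
  rewrite lerD2r.
  have -> : \sum_k a k - n%:R * th = \sum_k (a k - th).
    by rewrite [RHS]sumrB sumr_const card_ord mulr_natl.
  apply: ler_sum => k _; rewrite ler_piMl // subr_ge0 //.
move: step2 step3 step5; rewrite step4 /a /th; lra.
Qed.

End K.

Section Aux.
Variable R : realType.
Local Notation C := (R[i]).
Local Notation toC := (real_complex R).
Local Notation MC := (map_mx toC).

Lemma MC_herm n (Y : 'M[R]_n) : Y^T = Y -> MC Y \is hermsymmx.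
Proof.
move=> sY; apply: realsym_hermsym.
  by apply/eqP; rewrite expr0 scale1r; apply/matrixP=> i j; rewrite !mxE -[in LHS]sY mxE.
by apply/mxOverP => i j; rewrite mxE; apply/complex_realP; exists (Y i j).
Qed.

Lemma decomp n (Y : 'M[R]_n) : Y^T = Y -> exists (U : 'M[C]_n) (r : 'I_n -> R),
  U \is unitarymx /\ MC Y = (U ^t* *m diag_mx (\row_j toC (r j)) *m U)%sesqui.
Proof.
move=> sY; have H := MC_herm sY.
have /orthomx_spectralP E := hermitian_normalmx H.
have Rd := hermitian_spectral_diag_real H.
exists (spectralmx (MC Y)), (fun j => complex.Re (spectral_diag (MC Y) 0 j)); split.
  exact: spectral_unitarymx.
rewrite {1}E invmx_unitary ?spectral_unitarymx //; congr (_ *m _ *m _).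
congr diag_mx; apply/rowP => j; rewrite mxE RRe_real //.
by move/mxOverP: Rd; apply.
Qed.

Lemma unitary_tK n (U : 'M[C]_n) : U \is unitarymx -> (U ^t* *m U)%sesqui = 1%:M.
Proof. by move=> Uu; have := mulmxKtV 1%:M Uu erefl; rewrite mul1mx. Qed.

Lemma charY n (Y : 'M[R]_n) (U : 'M[C]_n) (r : 'I_n -> R) :
  U \is unitarymx -> MC Y = (U ^t* *m diag_mx (\row_j toC (r j)) *m U)%sesqui ->
  char_poly Y = \prod_(j < n) ('X - (r j)%:P).
Proof.
move=> Uu E; apply: (@map_poly_inj _ _ toC).
rewrite map_char_poly E char_poly_conj1 ?unitary_tK // char_poly_diag rmorph_prod.
by apply: eq_bigr => j _; rewrite mxE rmorphB /= map_polyX map_polyC.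
Qed.

Definition geR := fun a b : R => b <= a.

Lemma spectrum_uniq n (X : 'M[R]_n) l1 l2 : spectrum X l1 -> spectrum X l2 -> l1 = l2.
Proof.
case=> _ s1 c1 [_ s2 c2]; apply: (@sorted_eq _ geR) => //.
- by move=> a b c; rewrite /geR => ba cb; exact: le_trans cb ba.
- by move=> a b /andP[ba ab]; apply/le_anti; rewrite /geR in ba ab; rewrite ab ba.
- by apply: prod_XsubC_eq; rewrite -c1 -c2.
Qed.

Lemma spectrum_of n (X : 'M[R]_n) (r : 'I_n -> R) :
  char_poly X = \prod_(j < n) ('X - (r j)%:P) ->
  spectrum X (sort geR [seq r j | j <- enum 'I_n]).
Proof.
move=> cX; split.
- by rewrite size_sort size_map size_enum_ord.
- by apply: sort_sorted => a b; rewrite /geR le_total.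
- rewrite cX (perm_big _ (permEl (perm_sort _ _))) /= big_map.
  by rewrite big_enum.
Qed.

Lemma eigs_perm n (Y : 'M[R]_n) : Y^T = Y ->
  exists r : 'I_n -> R, [/\ spectrum Y (eigs Y),
     perm_eq (eigs Y) [seq r j | j <- enum 'I_n] &
     exists U : 'M[C]_n, U \is unitarymx /\
       MC Y = (U ^t* *m diag_mx (\row_j toC (r j)) *m U)%sesqui].
Proof.
move=> sY; have [U [r [Uu E]]] := decomp sY.
have sp := spectrum_of (charY Uu E).
have spe : spectrum Y (eigs Y) by rewrite /eigs; apply: xgetPex; exists (sort geR [seq r j | j <- enum 'I_n]).
exists r; split => //; last by exists U.
by rewrite (spectrum_uniq spe sp) perm_sort.
Qed.




Lemma sumsq_gt0 n (v : 'rV[R]_n) : v != 0 -> 0 < (v *m v^T) 0 0.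
Proof.
move=> v0; rewrite mxE.
have [i vi] : exists i, v 0 i != 0.
  apply/existsP; apply: contraR v0 => /existsPn H; apply/eqP/rowP => i.
  by rewrite mxE; apply/eqP; move: (H i); rewrite negbK.
rewrite (bigD1 i) //=; apply: ltr_pwDl.
  by rewrite mxE lt0r mulf_neq0 //= -expr2 sqr_ge0.
apply: sumr_ge0 => j _; rewrite mxE -expr2; exact: sqr_ge0.
Qed.


Lemma root_eig n (Y : 'M[R]_n) x : root (char_poly Y) x ->
  exists2 v : 'rV[R]_n, v != 0 & (v *m Y *m v^T) 0 0 = x * (v *m v^T) 0 0.
Proof.
rewrite -eigenvalue_root_char => /eigenvalueP [v vY v0]; exists v => //.
by rewrite vY -scalemxAl mxE.
Qed.

Lemma root_psd n (Y : 'M[R]_n) x : psd Y -> root (char_poly Y) x -> 0 <= x.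
Proof.
move=> [_ pY] /root_eig [v v0 E]; have := pY v^T; rewrite trmxK E.
by rewrite pmulr_lge0 // sumsq_gt0.
Qed.

Lemma root_pd n (Y : 'M[R]_n) x : pd Y -> root (char_poly Y) x -> 0 < x.
Proof.
move=> [_ pY] /root_eig [v v0 E]; have := pY v^T; rewrite trmxK E.
rewrite pmulr_lgt0 ?sumsq_gt0 //; apply.
by apply: contraNneq v0 => /(congr1 trmx); rewrite trmxK trmx0 => ->.
Qed.

Lemma spectrum_root n (Y : 'M[R]_n) l x : spectrum Y l -> x \in l -> root (char_poly Y) x.
Proof. by case=> _ _ ->; rewrite root_prod_XsubC. Qed.


Lemma ReD (x y : C) : complex.Re (x + y) = complex.Re x + complex.Re y.
Proof. by case: x; case: y. Qed.

Lemma Re_sum (I : Type) (r : seq I) (P : pred I) (F : I -> C) :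
  complex.Re (\sum_(i <- r | P i) F i) = \sum_(i <- r | P i) complex.Re (F i).
Proof. exact: (big_morph _ ReD (erefl _)). Qed.

Lemma ReMr (x : C) (y : R) : complex.Re (x * toC y) = complex.Re x * y.
Proof. by case: x => a b /=; simpc. Qed.

Lemma ReC (y : R) : complex.Re (toC y) = y.
Proof. by []. Qed.

Lemma normsq (w : C) : w * w^* = toC (complex.Re w ^+ 2 + complex.Im w ^+ 2).
Proof.
by case: w => a b; rewrite (_ : ((a +i* b)%C)^* = (a +i* (- b))%C) //; simpc;
  rewrite /= !expr2 [b * a]mulrC addNr.
Qed.

Lemma trace_re n (Gc : 'M[C]_n) (Y : 'M[R]_n) :
  \tr (\matrix_(i, j) complex.Re (Gc i j) *m Y) = complex.Re (\tr (Gc *m MC Y)).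
Proof.
rewrite /mxtrace Re_sum; apply: eq_bigr => i _; rewrite !mxE Re_sum.
by apply: eq_bigr => k _; rewrite !mxE ReMr.
Qed.

Lemma trmxC_mul m n p (A : 'M[C]_(m, n)) (B : 'M[C]_(n, p)) :
  ((A *m B) ^t* = B ^t* *m A ^t*)%sesqui.
Proof. by rewrite trmx_mul map_mxM. Qed.

Definition Pmx n (W : 'M[C]_n) k j := complex.Re (W k j) ^+ 2 + complex.Im (W k j) ^+ 2.

Lemma trace_formula n (U V : 'M[C]_n) (r g : 'I_n -> R) :
  U \is unitarymx -> V \is unitarymx ->
  complex.Re (\tr ((V ^t* *m diag_mx (\row_k toC (g k)) *m V) *m
                   (U ^t* *m diag_mx (\row_j toC (r j)) *m U)))%sesqui =
  \sum_k \sum_j g k * Pmx (V *m U ^t*)%sesqui k j * r j.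
Proof.
move=> Uu Vu.
set Dg := diag_mx _; set Dr := diag_mx _.
have -> : (V ^t* *m Dg *m V *m (U ^t* *m Dr *m U) =
   V ^t* *m (Dg *m (V *m U ^t*) *m Dr *m U))%sesqui by rewrite !mulmxA.
rewrite mxtrace_mulC.
have -> : (Dg *m (V *m U ^t*) *m Dr *m U *m V ^t* =
   Dg *m (V *m U ^t*) *m Dr *m (V *m U ^t*) ^t*)%sesqui.
  by rewrite trmxC_mul trmxCK !mulmxA.
set W := (V *m U ^t*)%sesqui; clearbody W.
rewrite /mxtrace Re_sum; apply: eq_bigr => k _.
rewrite mxE Re_sum; apply: eq_bigr => j _.
rewrite mul_mx_diag mul_diag_mx !mxE /Pmx.
by rewrite mulrAC ReMr -[_ * W k j * _]mulrA normsq -rmorphM ReC.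
Qed.


Lemma Pmx_ge0 n (W : 'M[C]_n) k j : 0 <= Pmx W k j.
Proof. by rewrite /Pmx addr_ge0 ?sqr_ge0. Qed.

Lemma Pmx_row n (W : 'M[C]_n) k : W \is unitarymx -> \sum_j Pmx W k j = 1.
Proof.
move=> /unitarymxP /matrixP /(_ k k) => E.
have := congr1 (@complex.Re R) E; rewrite mxE Re_sum => E2.
rewrite (_ : 1 = complex.Re ((1%:M : 'M[C]_n) k k)); last by rewrite mxE eqxx.
rewrite -E2; apply: eq_bigr => j _; by rewrite !mxE normsq.
Qed.

Lemma Pmx_col n (W : 'M[C]_n) j : W \is unitarymx -> \sum_k Pmx W k j = 1.
Proof.
move=> /unitary_tK /matrixP /(_ j j) => E.
have := congr1 (@complex.Re R) E; rewrite mxE Re_sum => E2.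
rewrite (_ : 1 = complex.Re ((1%:M : 'M[C]_n) j j)); last by rewrite mxE eqxx.
rewrite -E2; apply: eq_bigr => k _; by rewrite !mxE mulrC normsq.
Qed.


Lemma card_lt n s : (s <= n)%N -> #|[pred i : 'I_n | (i < s)%N]| = s.
Proof.
move=> sn; rewrite -sum1_card.
rewrite (eq_bigl (fun i : 'I_n => (i < s)%N)) // -(big_ord_widen _ (fun=> 1%N) sn).
by rewrite sum1_card card_ord.
Qed.

Lemma Phi_perm n s (Y : 'M[R]_n) (r : 'I_n -> R) t : (s <= n)%N ->
  perm_eq (eigs Y) [seq r j | j <- enum 'I_n] ->
  exists J : {set 'I_n}, #|J| = s /\
    Phi s Y t = (\sum_(j in J) elog (r j + t))%E.
Proof.
move=> sn pe.
have : perm_eq (eigs Y) [tuple r j | j < n] by [].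
case/tuple_permP => p E.
pose A := [pred i : 'I_n | (i < s)%N].
exists [set p i | i in A]; split.
  by rewrite card_imset ?card_lt //; exact: perm_inj.
rewrite big_imset /=; last by move=> x y _ _; exact: perm_inj.
rewrite /Phi big_add1 /= -/(nat_of_ord _) big_mkord.
rewrite (big_ord_widen _ (fun i => elog (eigval Y i.+1 + t)) sn).
apply: eq_bigr => i _; rewrite /eigval /= E /=.
by rewrite (nth_map i) ?size_enum_ord // nth_ord_enum tnth_mktuple.
Qed.


Lemma eig_ge0 n (N : 'M[R]_n) l x : psd N -> spectrum N l -> x \in l -> 0 <= x.
Proof. by move=> pN sp xl; apply: (root_psd pN); exact: spectrum_root sp xl. Qed.

Lemma perm_ge0 n (N : 'M[R]_n) (e : 'I_n -> R) k : psd N ->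
  spectrum N (eigs N) -> perm_eq (eigs N) [seq e j | j <- enum 'I_n] -> 0 <= e k.
Proof.
move=> pN sp pe; apply: (eig_ge0 pN sp).
by rewrite (perm_mem pe) map_f ?mem_enum.
Qed.

Lemma Pmx1 n (k j : 'I_n) : Pmx (1%:M : 'M[C]_n) k j = (k == j)%:R.
Proof. by rewrite /Pmx mxE; case: (k == j); rewrite /= expr0n ?addr0 ?expr1n. Qed.

Lemma majorant n s (N : 'M[R]_n) (t tau : R) : psd N -> 0 <= t -> t <= tau ->
  0 < tau -> (s <= n)%N ->
  exists (G : 'M[R]_n) (kappa : R),
   (forall Y, psd Y -> (Phi s Y t <= (\tr (G *m Y) + kappa)%:E)%E) /\
   \tr (G *m N) + kappa = \sum_(x <- eigs N) ((x + t) / (x + tau) + ln (x + tau))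
      - s%:R - (n%:R - s%:R) * (t / tau + ln tau).
Proof.
move=> pN t0 ttau tau0 sn; have [sN _] := pN.
have [e [spN peN [V [Vu EN]]]] := eigs_perm sN.
have e0 k : 0 <= e k := perm_ge0 k pN spN peN.
pose g k := (e k + tau)^-1.
have g0 k : 0 < g k by rewrite invr_gt0 ltr_wpDl.
have gtau k : g k <= tau^-1 by rewrite lef_pV2 ?posrE ?ltr_wpDl // lerDr.
pose Gc := (V ^t* *m diag_mx (\row_k toC (g k)) *m V)%sesqui.
exists (\matrix_(i, j) complex.Re (Gc i j)),
  (\sum_k (t * g k - ln (g k)) - s%:R - (n%:R - s%:R) * (t / tau + ln tau)).
split.
  move=> Y pY; have [sY _] := pY.
  have [r [spY peY [U [Uu EY]]]] := eigs_perm sY.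
  have r0 j : 0 <= r j := perm_ge0 j pY spY peY.
  have [J [cJ ->]] := Phi_perm t sn peY.
  have Wu : (V *m U ^t*)%sesqui \is unitarymx.
    by apply: mul_unitarymx => //; rewrite trmxC_unitary.
  rewrite trace_re EY trace_formula //.
  case: (boolP [forall j in J, 0 < r j + t]) => [/forall_inP Jpos | /forall_inPn [j jJ rj]].
    rewrite (eq_bigr (fun j => (ln (r j + t))%:E)); last first.
      by move=> j jJ; rewrite /elog Jpos.
    rewrite sumEFin lee_fin !addrA -cJ.
    apply: (core (P := Pmx (V *m U ^t*)%sesqui)) => //.
    - by move=> k j; exact: Pmx_ge0.
    - by move=> j; exact: Pmx_col.
    - by move=> k; exact: Pmx_row.
  suff -> : (\sum_(j in J) elog (r j + t) = -oo)%E by rewrite leNye.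
  apply/esum_eqNyP; exists j; split; [by rewrite mem_index_enum | exact: jJ |].
  by rewrite /elog (negbTE rj).
rewrite trace_re EN trace_formula // (unitarymxP Vu).
rewrite !addrA; congr (_ - _ - _).
rewrite -big_split /= (perm_big _ peN) big_map big_enum /=.
apply: eq_bigr => k _.
rewrite (bigD1 k) //= big1 => [|j /negbTE jk]; last by rewrite Pmx1 eq_sym jk mulr0 mul0r.
rewrite Pmx1 eqxx mulr1 addr0 lnV ?posrE ?ltr_wpDl // opprK addrA.
by rewrite (mulrC t) -mulrDr mulrC.
Qed.


Lemma horner_char n (K : 'M[R]_n) a : (char_poly K).[a] = \det (a%:M - K).
Proof.
rewrite -horner_evalE /char_poly -det_map_mx; congr (\det _).
apply/matrixP => i j; rewrite !mxE /= rmorphB rmorphMn /= !horner_evalE hornerX hornerC //.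
Qed.

Lemma prod_opp (l : seq R) (F : R -> R) :
  \prod_(x <- l) (- F x) = (-1) ^+ (size l) * \prod_(x <- l) F x.
Proof.
elim: l => [|y l IH]; first by rewrite !big_nil expr0 mulr1.
by rewrite !big_cons IH exprS /=; ring.
Qed.

Lemma det_from_spec k (K : 'M[R]_k) l t : spectrum K l ->
  \det (K + t%:M) = \prod_(x <- l) (x + t).
Proof.
case=> sz _ cK; have := horner_char K (- t).
rewrite cK horner_prod (eq_bigr (fun x => - (x + t))); last first.
  by move=> x _; rewrite hornerD hornerN hornerX hornerC opprD addrC.
rewrite prod_opp sz.
have -> : (- t)%:M - K = (-1) *: (K + t%:M).
  by apply/matrixP => i j; rewrite !mxE mulNrn mulN1r opprD addrC.
rewrite detZ => E; have := congr1 ( *%R ((-1) ^+ k)) E.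
by rewrite !signrMK.
Qed.

Lemma char_BBt n k (B : 'M[R]_(n, k)) : (k <= n)%N ->
  char_poly (B *m B^T) = char_poly (B^T *m B) * 'X^(n - k).
Proof.
move=> kn.
set Bp := map_mx polyC B.
have cp1 : char_poly_mx (B *m B^T) = 'X%:M - Bp *m Bp^T.
  by rewrite /char_poly_mx map_mxM map_trmx.
have cp2 : char_poly_mx (B^T *m B) = 'X%:M - Bp^T *m Bp.
  by rewrite /char_poly_mx map_mxM map_trmx.
pose L := block_mx ('X%:M : 'M_n) Bp Bp^T (1%:M : 'M_k).
have E1 : L *m block_mx 1%:M 0 (- Bp^T) 1%:M = block_mx (char_poly_mx (B *m B^T)) Bp 0 1%:M.
  by rewrite mulmx_block cp1 !mulmx1 !mulmx0 !mul1mx !add0r mulmxN addrN.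

have E2 : block_mx 1%:M 0 (- Bp^T) ('X%:M : 'M_k) *m L =
          block_mx ('X%:M : 'M_n) Bp 0 (char_poly_mx (B^T *m B)).
  rewrite mulmx_block cp2 !mul1mx !mul0mx !addr0 mulmx1 !mulNmx.
  by rewrite mul_mx_scalar mul_scalar_mx addNr addrC.
have D1 := congr1 determinant E1; rewrite det_mulmx det_lblock !det1 mulr1 det_ublock det1 mulr1 in D1.
have D2 := congr1 determinant E2; rewrite det_mulmx det_lblock det1 mul1r det_ublock in D2.
rewrite !det_scalar in D2.
rewrite mulr1 in D1.
apply: (@mulfI _ ('X^k)); first by rewrite expf_neq0 ?polyX_eq0.
by rewrite /char_poly -D1 D2 mulrCA -exprD subnKC // mulrC.
Qed.


Definition Esel n (S : {set 'I_n}) : 'M[R]_(#|S|, n) :=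
  \matrix_(j, i) ((enum_val j == i)%:R).

Lemma mulmx_EselT m n (S : {set 'I_n}) (X : 'M[R]_(m, n)) :
  X *m (Esel S)^T = \matrix_(i, j) X i (enum_val j).
Proof.
apply/matrixP => i j; rewrite !mxE (bigD1 (enum_val j)) //= big1.
  by rewrite !mxE eqxx mulr1 addr0.
by move=> l /negbTE lj; rewrite !mxE eq_sym lj mulr0.
Qed.

Lemma Esel_mul m n (S : {set 'I_n}) (X : 'M[R]_(n, m)) :
  Esel S *m X = \matrix_(j, i) X (enum_val j) i.
Proof.
apply/matrixP => j i; rewrite !mxE (bigD1 (enum_val j)) //= big1.
  by rewrite !mxE eqxx mul1r addr0.
by move=> l /negbTE lj; rewrite !mxE eq_sym lj mul0r.
Qed.

Lemma EselEt n (S : {set 'I_n}) : Esel S *m (Esel S)^T = 1%:M.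
Proof.
apply/matrixP => j j'; rewrite mulmx_EselT !mxE.
by rewrite (inj_eq enum_val_inj).
Qed.

Lemma principal_E n (C : 'M[R]_n) (S : {set 'I_n}) :
  principal_submx C S = Esel S *m C *m (Esel S)^T.
Proof.
by apply/matrixP => j j'; rewrite mulmx_EselT Esel_mul !mxE.
Qed.

Lemma sumsq_ge0 n (v : 'rV[R]_n) : 0 <= (v *m v^T) 0 0.
Proof. by rewrite mxE; apply: sumr_ge0 => i _; rewrite mxE -expr2 sqr_ge0. Qed.

Lemma psd_BBt m k (B : 'M[R]_(m, k)) : psd (B *m B^T).
Proof.
split; first by rewrite /symmetric_mx trmx_mul trmxK.
move=> v; have -> : v^T *m (B *m B^T) *m v = (v^T *m B) *m (v^T *m B)^T.
  by rewrite trmx_mul trmxK !mulmxA.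
exact: sumsq_ge0.
Qed.


Lemma pd_principal n (C : 'M[R]_n) (S : {set 'I_n}) : pd C -> pd (principal_submx C S).
Proof.
case=> sC pC; rewrite principal_E; split.
  by rewrite /symmetric_mx !trmx_mul trmxK sC mulmxA.
move=> v v0; have := pC ((Esel S)^T *m v).
rewrite trmx_mul trmxK !mulmxA; apply.
apply/eqP => H; move/eqP: v0; apply.
by have := congr1 (mulmx (Esel S)) H; rewrite mulmxA EselEt mul1mx mulmx0.
Qed.


Lemma le_lim (z : \bar R) (L K : R) : 0 <= K ->
  (forall e, 0 < e -> (z <= (L + e * K)%:E)%E) -> (z <= L%:E)%E.
Proof.
move=> K0; case: z => [r | | ] H; last by rewrite leNye.
  rewrite lee_fin; apply/ler_addgt0Pr => e e0.
  have K1 : 0 < K + 1 by rewrite ltr_wpDl.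
  have := H (e / (K + 1)) (divr_gt0 e0 K1); rewrite lee_fin => /le_trans; apply.
  rewrite lerD2l -mulrA ger_pMr // ler_pdivrMl // mulr1 lerDl //.
by have := H 1 ltr01.
Qed.

Lemma root_shift_pd k (K : 'M[R]_k) t x : pd (K + t%:M) -> root (char_poly K) x -> 0 < x + t.
Proof.
move=> [_ pK] /root_eig [v v0 E].
have := pK v^T; rewrite trmxK mulmxDr mulmxDl mxE E.
rewrite mul_mx_scalar -scalemxAl [X in _ + X]mxE -mulrDl pmulr_lgt0 ?sumsq_gt0 //; apply.
by apply/eqP => /(congr1 trmx); rewrite trmxK trmx0 => v00; move/eqP: v0.
Qed.

Lemma prod_nseq0 m : \prod_(x <- nseq m (0 : R)) ('X - x%:P) = 'X^m.
Proof.
elim: m => [|m IH]; first by rewrite big_nil expr0.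
by rewrite /= big_cons IH subr0 exprS.
Qed.

Lemma sum_nseq0 m (F : R -> R) : \sum_(x <- nseq m (0 : R)) F x = m%:R * F 0.
Proof.
elim: m => [|m IH]; first by rewrite big_nil mul0r.
by rewrite /= big_cons IH mulrSr mulrDl mul1r addrC.
Qed.

Lemma sum_sub1 (l : seq R) (F : R -> R) :
  \sum_(x <- l) (F x - 1) = \sum_(x <- l) F x - (size l)%:R.
Proof.
elim: l => [|y l IH]; first by rewrite !big_nil subr0.
by rewrite !big_cons IH /= mulrSr; ring.
Qed.

Lemma ln_prod (l : seq R) (F : R -> R) : (forall x, x \in l -> 0 < F x) ->
  ln (\prod_(x <- l) F x) = \sum_(x <- l) ln (F x).
Proof.
elim: l => [|y l IH] H; first by rewrite !big_nil ln1.
have Hl x : x \in l -> 0 < F x by move=> xl; apply: H; rewrite inE xl orbT.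
rewrite !big_cons lnM' ?IH //; first by apply: H; rewrite mem_head.
by rewrite big_seq; apply: prodr_gt0 => x; exact: Hl.
Qed.

Lemma sorted_geR_nseq m (x : R) : sorted geR (nseq m x).
Proof.
elim: m => [|[|m] IH] //=; rewrite {1}/geR lexx /=; exact: IH.
Qed.

Lemma main_S n (C A : 'M[R]_n) (S : {set 'I_n}) (t : R) :
  pd C -> 0 <= t -> cholesky_factor (C - t%:M) A ->
  Phi_hat #|S| (Mx A (fun i => (i \in S)%:R)) t = elog (\det (principal_submx C S)).
Proof.
move=> pC t0 [_ _ chol].
have kn : (#|S| <= n)%N by rewrite -[X in (_ <= X)%N]card_ord max_card.
set k := #|S| in kn *.
set B := A *m (Esel S)^T.
have EM : Mx A (fun i => (i \in S)%:R) = B *m B^T.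
  apply/matrixP => p q; rewrite /Mx summxE mxE.
  rewrite (eq_bigr (fun j => A p (enum_val j) * A q (enum_val j))); last first.
    by move=> j _; rewrite /B mulmx_EselT !mxE.
  rewrite -(big_enum_val (fun i => A p i * A q i)) /= [RHS]big_mkcond /=.
  apply: eq_bigr => i _; rewrite !mxE big_ord1 !mxE.
  by case: (i \in S); rewrite ?mul1r ?mul0r.
have EK : B^T *m B = principal_submx C S - t%:M.
  rewrite /B trmx_mul trmxK mulmxA -[_ *m A^T *m A]mulmxA -chol.
  rewrite mulmxBr mulmxBl principal_E; congr (_ - _).
  by rewrite mul_mx_scalar -scalemxAl EselEt scalemx1.
set M := B *m B^T.
set K := B^T *m B.
have psdM : psd M := psd_BBt B.
have psdK : psd K by have := psd_BBt B^T; rewrite trmxK.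
have pdK : pd (K + t%:M) by rewrite /K EK subrK; exact: pd_principal.
have [_ [spK _ _]] := eigs_perm psdK.1.
set nu := eigs K.
have nu_sz : size nu = k by case: spK.
have nu_ge0 x : x \in nu -> 0 <= x by move=> xn; exact: eig_ge0 psdK spK xn.
have nu_pos x : x \in nu -> 0 < x + t.
  by move=> xn; apply: (root_shift_pd pdK); exact: spectrum_root spK xn.
have spM : spectrum M (nu ++ nseq (n - k) 0).
  split.
  - by rewrite size_cat size_nseq nu_sz subnKC.
  - have tr : transitive geR by move=> a b c; rewrite /geR => ba cb; exact: le_trans cb ba.
    rewrite sorted_pairwise // pairwise_cat; apply/and3P; split.
    + apply/allrelP => x y xn /nseqP [-> _]; exact: nu_ge0.
    + by rewrite -sorted_pairwise //; case: spK.
    + by rewrite -sorted_pairwise // sorted_geR_nseq.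
  - by rewrite /M char_BBt // big_cat /= prod_nseq0; case: spK => _ _ ->.
have eM : eigs M = nu ++ nseq (n - k) 0.
  have [_ [spM' _ _]] := eigs_perm psdM.1.
  exact: spectrum_uniq spM' spM.
have PhiM : Phi k M t = (\sum_(x <- nu) ln (x + t))%:E.
  rewrite -sumEFin big_seq (eq_bigr (fun x => elog (x + t))); last first.
    by move=> x xn; rewrite /elog nu_pos.
  rewrite -big_seq (big_nth 0) nu_sz /Phi big_add1 /=.
  apply: eq_big_nat => i /andP [_ ik].
  by rewrite /eigval eM nth_cat nu_sz ik.
have detE : \det (principal_submx C S) = \prod_(x <- nu) (x + t).
  by rewrite -(subrK (t%:M) (principal_submx C S)) -EK; exact: det_from_spec.
have prodpos : 0 < \prod_(x <- nu) (x + t).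
  by rewrite big_seq; apply: prodr_gt0 => x; exact: nu_pos.
rewrite detE /elog prodpos ln_prod // -PhiM EM.
apply/le_anti/andP; split; last first.
  by apply/ereal_infP => y [f [_ fmaj] <-]; exact: fmaj.
rewrite PhiM; apply: (@le_lim _ _ (\sum_(x <- nu) (x + t)^-1)).
  by rewrite big_seq; apply: sumr_ge0 => x xn; rewrite invr_ge0 ltW ?nu_pos.
move=> e e0.
have tle : t <= t + e by lra.
have tp : 0 < t + e by lra.
have [G [kappa [maj fM]]] := majorant psdM t0 tle tp kn.
apply: ge_ereal_inf; exists (\tr (G *m M) + kappa)%:E.
  exists (fun Y => (\tr (G *m Y) + kappa)%:E) => //; split; last exact: maj.
  move=> X Y _ _ l _; rewrite -!EFinM -EFinD lee_fin mulmxDr -!scalemxAr mxtraceD !mxtraceZ.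
  lra.
rewrite fM eM big_cat /= sum_nseq0 !add0r natrB // lee_fin.
suff H : \sum_(x <- nu) ((x + t) / (x + (t + e)) + ln (x + (t + e))) - k%:R <=
         \sum_(x <- nu) ln (x + t) + e * \sum_(x <- nu) (x + t)^-1 by lra.
rewrite -nu_sz -sum_sub1 mulr_sumr -big_split /= big_seq [X in _ <= X]big_seq.
apply: ler_sum => x xn; have a0 := nu_pos x xn.
have h1 : (x + t) / (x + (t + e)) <= 1 by rewrite ler_pdivrMr ?mul1r; lra.
have h2 := @ln_tangent R (x + (t + e)) (x + t) ltac:(lra) a0.
rewrite addrA mulrDl divff ?gt_eqF // in h2.
move: h1 h2; rewrite !addrA => h1 h2; lra.
Qed.

End Aux.

Theorem corollary1 (R : realType) (n s : nat) (C : 'M[R]_n) :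
  (1 <= n)%N -> (1 <= s <= n)%N -> pd C ->
  forall t : R, 0 <= t -> t <= lambda_min C ->
  forall A : 'M[R]_n, cholesky_factor (C - t%:M) A ->
  zstar C s = rhs_max A s t.
Proof.
move=> _ _ pC t t0 _ A chol.
rewrite /zstar /rhs_max.
rewrite (reindex (fun b : {ffun 'I_n -> bool} => [set i | b i])) /=; last first.
  apply: onW_bij; exists (fun S : {set 'I_n} => [ffun i => i \in S]).
  - by move=> b; apply/ffunP => i; rewrite ffunE inE.
  - by move=> S; apply/setP => i; rewrite inE ffunE.
have cardb (b : {ffun 'I_n -> bool}) : #|[set i | b i]| = (\sum_i b i)%N.
  rewrite -sum1_card big_mkcond /=; apply: eq_bigr => i _; rewrite inE.
  by case: (b i).
apply: eq_big => [b | b /eqP cb]; first by rewrite cardb.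
have E := main_S [set i | b i] pC t0 chol.
rewrite -cb -E /Mx; congr (Phi_hat _ _ t); apply: eq_bigr => i _.
by rewrite inE.
Qed.
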